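(* Let $p=p(n)=o\!\left(\frac1n\right)$. Then for all sufficiently large $n\in\mathbb{N}$ we have $u_2(n,p)=0$ and $u_2'(n,p)=0$.
   Context: $G(n,p)$ is the Erdős–Rényi random graph on $n$ labelled vertices (vertex set $V$), each edge present independently with probability $p=p(n)$; $\mathbb{P}_{n,p}$ is the corresponding probability and $q=1-p$. A diameter graph in $\mathbb{R}^d$ is a graph $(V,E)$ with $V\subset\mathbb{R}^d$ finite and $E=\{\{\mathbf{x},\mathbf{y}\}\subseteq V: |\mathbf{x}-\mathbf{y}|=\operatorname{diam}V\}$, where $\operatorname{diam}V=\max_{\mathbf{x},\mathbf{y}\in V}|\mathbf{x}-\mathbf{y}|$ (Euclidean norm); a graph is a diameter graph in $\mathbb{R}^d$ if it is isomorphic to one. $u_d(n,p)$ is the largest positive integer $k$ such that $\mathbb{P}_{n,p}\big(\exists W\subseteq V,\ |W|=k,\ G[W]$ is a diameter graph in $\mathbb{R}^d$ and $\chi(G[W])=d+1\big)>\frac12$, where $G[W]$ is the induced subgraph; if no such $k$ exists, $u_d(n,p)=0$. $u_d'(n,p)$ is defined identically with the additional requirement that $G[W]$ be connected. *)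

(* Defs.v *)
From Stdlib Require Import Reals ClassicalEpsilon.
From mathcomp Require Import all_boot.

Set Implicit Arguments. Unset Strict Implicit. Unset Printing Implicit Defensive.

Definition pbool (P : Prop) : bool :=
  if excluded_middle_informative P then true else false.

Definition epair (n : nat) := {x : 'I_n * 'I_n | x.1 < x.2}.

Definition graph (n : nat) := {set epair n}.

Definition adj (n : nat) (G : graph n) (i j : 'I_n) : bool :=
  [exists e : epair n, (e \in G) && ((val e == (i, j)) || (val e == (j, i)))].

Definition prob (n : nat) (p : R) (A : graph n -> Prop) : R :=
  \big[Rplus/R0]_(G : {set epair n} | pbool (A G))
     (Rmult (pow p #|G|) (pow (Rminus 1 p) (#|{: epair n}| - #|G|))).

Definition point (d : nat) := 'I_d -> R.

Definition dist (d : nat) (x y : point d) : R :=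
  sqrt (\big[Rplus/R0]_(i < d) (pow (Rminus (x i) (y i)) 2)).

Definition diamW (d n : nat) (W : {set 'I_n}) (f : 'I_n -> point d) : R :=
  \big[Rmax/R0]_(x in W) \big[Rmax/R0]_(y in W) dist (f x) (f y).

(* G[W] is isomorphic to the diameter graph on the point set f(W) in R^d. *)
Definition is_diameter_graph (d n : nat) (G : graph n) (W : {set 'I_n}) : Prop :=
  exists f : 'I_n -> point d,
    {in W &, injective f} /\
    (forall x y, x \in W -> y \in W -> x != y ->
       (adj G x y <-> dist (f x) (f y) = diamW W f)).

Definition colorable (n : nat) (G : graph n) (W : {set 'I_n}) (k : nat) : Prop :=
  exists c : 'I_n -> nat,
    (forall x, x \in W -> c x < k) /\
    (forall x y, x \in W -> y \in W -> adj G x y -> c x <> c y).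

Definition chromatic_number_is (n : nat) (G : graph n) (W : {set 'I_n}) (k : nat)
  : Prop :=
  colorable G W k /\ (forall j, j < k -> ~ colorable G W j).

Definition connectedW (n : nat) (G : graph n) (W : {set 'I_n}) : Prop :=
  forall x y, x \in W -> y \in W ->
    connect (fun a b => [&& a \in W, b \in W & adj G a b]) x y.

Definition event (d n k : nat) (conn : bool) (G : graph n) : Prop :=
  exists W : {set 'I_n}, #|W| = k /\ is_diameter_graph d G W /\
    chromatic_number_is G W d.+1 /\ (conn -> connectedW G W).

(* u is the largest positive k with P(event) > 1/2, or 0 if none exists. *)
Definition is_u_gen (conn : bool) (d n : nat) (p : R) (u : nat) : Prop :=
  (u = 0 /\ forall k, 0 < k -> ~ (Rgt (@prob n p (event d k conn)) (Rinv (INR 2)))) \/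
  (0 < u /\ (Rgt (@prob n p (event d u conn)) (Rinv (INR 2))) /\
     forall k, 0 < k -> (Rgt (@prob n p (event d k conn)) (Rinv (INR 2))) -> k <= u).

Definition is_u (d n : nat) (p : R) (u : nat) : Prop := is_u_gen false d n p u.
Definition is_u' (d n : nat) (p : R) (u : nat) : Prop := is_u_gen true d n p u.

(* Main.v *)
Require Import Defs.
From Stdlib Require Import Reals Lra ClassicalEpsilon Classical.
From HB Require Import structures.
From mathcomp Require Import all_boot zify.
Set Implicit Arguments. Unset Strict Implicit. Unset Printing Implicit Defensive.
Lemma pboolP (P : Prop) : reflect P (pbool P).
Proof. rewrite /pbool; case: excluded_middle_informative => h; constructor => //. Qed.

Section Graph.
Variables (n : nat) (G : graph n).

Lemma adj_sym x y : adj G x y = adj G y x.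
Proof.
rewrite /adj; apply/existsP/existsP => -[e /andP [eG h]]; exists e; rewrite eG /=;
  by rewrite orbC.
Qed.

Lemma adj_irr x : adj G x x = false.
Proof.
apply/existsP => -[[[a b] /= ab] /andP [_ /orP [] /eqP [ea eb]]];
  by rewrite ea eb ltnn in ab.
Qed.

Definition core (S : {set 'I_n}) :=
  (exists x, x \in S) /\ forall x, x \in S -> exists y z,
    [/\ y \in S, z \in S, y != z, adj G x y & adj G x z].

Lemma core_or_col k (W : {set 'I_n}) : #|W| <= k ->
  colorable G W 2 \/ exists S, core S.
Proof.
have col0 : forall W : {set 'I_n}, W = set0 -> colorable G W 2.
  by move=> W0 ->; exists (fun _ => 0) => //; split => x; rewrite inE.
elim: k W => [|k IH] W hW.
  by left; apply: col0; apply/eqP; rewrite -cards_eq0; lia.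
case: (classic (exists x, x \in W /\ ~ exists y z,
    [/\ y \in W, z \in W, y != z, adj G x y & adj G x z])); last first.
  move=> H; case: (set_0Vmem W) => [->|[x0 x0W]]; first by left; apply: col0.
  right; exists W; split; first by exists x0.
  move=> x xW; apply: NNPP => nx; apply: H; by exists x.
move=> [x [xW nx]].
have hW' : #|W :\ x| <= k by rewrite (cardsD1 x W) xW in hW; lia.
case: (IH _ hW') => [[c [c2 cp]]|]; last by right.
left.
pose c' y := if y == x then
   (if [pick z in W :\ x | adj G x z] is Some z then 1 - c z else 0) else c y.
have key : forall y, y \in W -> adj G x y -> c' x <> c y.
  move=> y yW axy; rewrite /c' eqxx.
  have yx : y != x by apply: contraTneq axy => ->; rewrite adj_irr.
  have yW' : y \in W :\ x by rewrite !inE yx.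
  case: pickP => [z /andP [zW' axz]|/(_ y)]; last by rewrite yW' axy.
  have zy : z = y.
    apply: NNPP => zy; apply: nx; exists z, y; split => //.
    - by move: zW'; rewrite !inE => /andP [].
    - by apply/eqP.
  rewrite zy; have := c2 y yW'; lia.
exists c'; split.
  move=> y yW; rewrite /c'; case: eqP => [_|/eqP yx]; last by apply: c2; rewrite !inE yx.
  by case: pickP => // z _; lia.
move=> y y' yW y'W ayy'.
case: (eqVneq y x) => [e|yx].
  subst y.
  have y'x : y' != x by apply: contraTneq ayy' => ->; rewrite adj_irr.
  rewrite {2}/c' (negbTE y'x); exact: key.
case: (eqVneq y' x) => [e|y'x].
  subst y'; have := key y yW; rewrite adj_sym => /(_ ayy') h.
  have cy : c' y = c y by rewrite /c' (negbTE yx).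
  by rewrite cy => e; apply: h.
rewrite /c' (negbTE yx) (negbTE y'x); apply: cp => //; by rewrite !inE ?yx ?y'x.
Qed.


Definition cyc (l : nat) (f : {ffun 'I_l -> 'I_n}) :=
  forall i : 'I_l, adj G (f i) (f (ordS i)).

Definition ipath (S : {set 'I_n}) (L : nat) (g : nat -> 'I_n) :=
  [/\ (forall i j, i < L -> j < L -> g i = g j -> i = j),
      (forall i, i.+1 < L -> adj G (g i) (g i.+1)) &
      (forall i, i < L -> g i \in S)].

Lemma ipath_le S L g : ipath S L g -> L <= n.
Proof.
case=> inj _ _.
have u : uniq (map g (iota 0 L)).
  rewrite map_inj_in_uniq ?iota_uniq // => i j; rewrite !mem_iota /=; apply: inj.
have := uniq_leq_size u (s2 := enum 'I_n) (fun x _ => mem_enum _ x).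
by rewrite size_map size_iota size_enum_ord.
Qed.

Lemma ordS_val l (i : 'I_l) : nat_of_ord (ordS i) = if i.+1 == l then 0 else i.+1.
Proof.
rewrite /= ; case: eqP => [->|h]; first by rewrite modnn.
by rewrite modn_small //; have := ltn_ord i; lia.
Qed.

Lemma core_cycle S : core S -> exists l, (3 <= l <= n) /\
  exists f : {ffun 'I_l -> 'I_n}, injective f /\ cyc f.
Proof.
rewrite /core => -[[x0 x0S] hS].
pose P L := pbool (exists g, ipath S L g).
have p1 : P 1.
  apply/pboolP; exists (fun _ => x0); split => //.
  - by move=> i j; lia.
have Pb : forall L, P L -> L <= n by move=> L /pboolP [g]; apply: ipath_le.
case: (ex_maxnP (ex_intro _ 1 p1) Pb) => L /pboolP [g gp] Lmax.
case: (gp) => ginj gadj gS.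
have L1 : 0 < L := Lmax 1 p1.
have Ln : L <= n := ipath_le gp.
have [y [z [yS zS yz axy axz]]] := hS (g 0) (gS 0 L1).
pose u := if (1 < L) && (y == g 1) then z else y.
have uS : u \in S by rewrite /u; case: ifP.
have axu : adj G (g 0) u by rewrite /u; case: ifP.
have ug1 : 1 < L -> u != g 1.
  move=> L2; rewrite /u L2 /=; case: (eqVneq y (g 1)) => [e|ne] //; by rewrite -e eq_sym.
case: (classic (exists j, j < L /\ g j = u)); last first.
  move=> nu.
  pose g' i := if i is i'.+1 then g i' else u.
  have : P L.+1.
    apply/pboolP; exists g'; split.
    - move=> [|i] [|j] hi hj //= e.
      + by case: nu; exists j; split => //.
      + by case: nu; exists i; split => //.
      + by congr (_.+1); apply: ginj.
    - move=> [|i] hi /=; first by rewrite adj_sym.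
      by apply: gadj.
    - by move=> [|i] hi /=; [ | apply: gS].
  by move/Lmax; lia.
move=> [j [jL gj]].
have j0 : j != 0.
  apply/eqP => j0; move: axu; by rewrite -gj j0 adj_irr.
have j1 : j != 1.
  apply/eqP => j1; have L2 : 1 < L by lia.
  by move: (ug1 L2); rewrite -gj j1 eqxx.
exists j.+1; split; first by lia.
exists [ffun i : 'I_j.+1 => g i]; split.
  move=> a b; rewrite !ffunE => e; apply: val_inj; apply: ginj => //.
  - exact: leq_trans (ltn_ord a) jL.
  - exact: leq_trans (ltn_ord b) jL.
move=> i; rewrite !ffunE ordS_val; case: eqP => [e|ne].
  have ij : nat_of_ord i = j by lia.
  by rewrite ij gj adj_sym.
apply: gadj; have := ltn_ord i; lia.
Qed.

End Graph.
Lemma RplusA' : associative Rplus. Proof. by move=> x y z; rewrite Rplus_assoc. Qed.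
Lemma RmultA' : associative Rmult. Proof. by move=> x y z; rewrite Rmult_assoc. Qed.
HB.instance Definition _ := Monoid.isComLaw.Build R R0 Rplus RplusA' Rplus_comm Rplus_0_l.
HB.instance Definition _ := Monoid.isComLaw.Build R R1 Rmult RmultA' Rmult_comm Rmult_1_l.
HB.instance Definition _ := Monoid.isMulLaw.Build R R0 Rmult Rmult_0_l Rmult_0_r.
HB.instance Definition _ := Monoid.isAddLaw.Build R Rmult Rplus Rmult_plus_distr_r Rmult_plus_distr_l.

Open Scope R_scope.


Lemma le_addr (a b : R) : 0 <= b -> a <= a + b.
Proof. lra. Qed.

Lemma sum_ge0 (I : finType) (P : pred I) (F : I -> R) :
  (forall i, P i -> 0 <= F i) -> 0 <= \big[Rplus/R0]_(i | P i) F i.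
Proof.
move=> H; apply: (big_ind (fun x => 0 <= x)) => //; [lra | move=> x y; lra].
Qed.

Lemma sum_le (I : finType) (P : pred I) (F G : I -> R) :
  (forall i, P i -> F i <= G i) -> \big[Rplus/R0]_(i | P i) F i <= \big[Rplus/R0]_(i | P i) G i.
Proof.
move=> H; apply: (big_ind2 (fun x y => x <= y)) => //; [lra | move=> *; lra].
Qed.

Lemma iter_mult (c : R) k : iter k (Rmult c) R1 = c ^ k.
Proof. by elim: k => //= k ->. Qed.

Lemma iter_plus (c : R) k : iter k (Rplus c) R0 = INR k * c.
Proof. elim: k => [|k IH] /=; first lra. rewrite IH -/(INR k.+1) S_INR; lra. Qed.

Lemma sum_const (I : finType) (P : pred I) (c : R) :
  \big[Rplus/R0]_(i | P i) c = INR #|P| * c.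
Proof. by rewrite big_const iter_plus. Qed.

Lemma prod_const (I : finType) (P : pred I) (c : R) :
  \big[Rmult/R1]_(i | P i) c = c ^ #|P|.
Proof. by rewrite big_const iter_mult. Qed.

Section Prob.
Variables (n : nat) (p : R).
Hypothesis p0 : 0 <= p.
Hypothesis p1 : p <= 1.

Definition w (G : graph n) : R :=
  (pow p #|G|) * (pow (1 - p) (#|{: epair n}| - #|G|)).

Lemma w_ge0 G : 0 <= w G.
Proof. rewrite /w; apply: Rmult_le_pos; apply: pow_le; lra. Qed.

Lemma probE A : prob p A = \big[Rplus/R0]_(G : graph n | pbool (A G)) w G.
Proof. by []. Qed.

Lemma prob_mono (A B : graph n -> Prop) :
  (forall G, A G -> B G) -> prob p A <= prob p B.
Proof.
move=> AB; rewrite !probE (bigID (fun G => pbool (A G)) (fun G => pbool (B G))) /=.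
have -> : \big[Rplus/R0]_(i | pbool (B i) && pbool (A i)) w i =
          \big[Rplus/R0]_(i | pbool (A i)) w i.
  apply: eq_bigl => G; case: (pboolP (A G)) => a; case: (pboolP (B G)) => b //=.
  by case: b; apply: AB.
apply: le_addr; exact: @sum_ge0 _ (fun i => pbool (B i) && ~~ pbool (A i)) w (fun G _ => w_ge0 G).
Qed.

Lemma prob_union (I : finType) (P : pred I) (A : I -> graph n -> Prop) :
  prob p (fun G => exists i, P i /\ A i G) <=
  \big[Rplus/R0]_(i | P i) prob p (A i).
Proof.
rewrite probE.
have -> : \big[Rplus/R0]_(i | P i) prob p (A i) =
   \big[Rplus/R0]_(G : graph n) \big[Rplus/R0]_(i | P i && pbool (A i G)) w G.
  under [RHS]eq_bigr do rewrite big_mkcondr.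
  rewrite -exchange_big /=; apply: eq_bigr => i Pi.
  by rewrite probE big_mkcond.
rewrite [X in _ <= X](bigID (fun G => pbool (exists i, P i /\ A i G))) /=.
have h2 := @sum_ge0 _ (fun G => ~~ pbool (exists i, P i /\ A i G))
  (fun G => \big[Rplus/R0]_(i | P i && pbool (A i G)) w G)
  (fun G _ => @sum_ge0 _ _ _ (fun i _ => w_ge0 G)).
suff : \big[Rplus/R0]_(G | pbool (exists i, P i /\ A i G)) w G <=
  \big[Rplus/R0]_(G | pbool (exists i, P i /\ A i G))
     \big[Rplus/R0]_(i | P i && pbool (A i G)) w G.
  by move=> h; apply: Rle_trans h _; apply: le_addr; exact: h2.
apply: sum_le => G /pboolP [i [Pi Ai]].
rewrite (bigD1 i) /=; last first.
  by rewrite Pi; apply/pboolP.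
apply: le_addr; exact: @sum_ge0 _ (fun j => (P j && pbool (A j G)) && (j != i)) (fun _ => w G) (fun _ _ => w_ge0 G).
Qed.


Lemma wE G : w G = \big[Rmult/R1]_(e : epair n) (if e \in G then p else 1 - p).
Proof.
rewrite (bigID (fun e => e \in G)) /=.
rewrite (eq_bigr (fun=> p)); last by move=> e ->.
rewrite [X in _ = _ * X](eq_bigr (fun=> 1 - p)); last by move=> e /negbTE ->.
rewrite !prod_const /w.
have -> : #|[pred e : epair n | e \in G]| = #|G| by apply: eq_card.
have -> : #|[pred e : epair n | e \notin G]| = (#|{: epair n}| - #|G|)%N.
  rewrite -(cardsC G) addKn; apply: eq_card => e; by rewrite !inE.
by [].
Qed.

Lemma prob_sub (E : {set epair n}) : prob p (fun G => E \subset G) = p ^ #|E|.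
Proof.
rewrite probE.
pose F (e : epair n) (b : bool) := if b then p else if e \in E then 0 else 1 - p.
have -> : \big[Rplus/R0]_(G : graph n | pbool (E \subset G)) w G =
     \big[Rplus/R0]_(G : graph n) \big[Rmult/R1]_(e : epair n) F e (e \in G).
  rewrite (bigID (fun G : graph n => pbool (E \subset G)) predT) /=.
  rewrite [X in _ = _ + X]big1 ?Rplus_0_r; last first.
    move=> G /pboolP /negP /subsetPn [e eE eG].
    rewrite (bigD1 e) //= /F (negbTE eG) eE; exact: Rmult_0_l.
  apply: eq_bigr => G /pboolP /subsetP EG; rewrite wE; apply: eq_bigr => e _.
  rewrite /F; case eG: (e \in G) => //; case eE: (e \in E) => //.
  by rewrite (EG _ eE) in eG.
rewrite (reindex (fun f : {ffun epair n -> bool} => FinSet f)) /=; last first.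
  by exists (@finfun_of_set _) => [f|[f]].
have -> : \big[Rplus/R0]_(f : {ffun epair n -> bool})
     \big[Rmult/R1]_(e : epair n) F e (e \in FinSet f) =
   \big[Rplus/R0]_(f : {ffun epair n -> bool}) \big[Rmult/R1]_(e : epair n) F e (f e).
  apply: eq_bigr => f _; apply: eq_bigr => e _; congr F; by rewrite unfold_in unlock.
rewrite -bigA_distr_bigA /=.
rewrite (eq_bigr (fun e => if e \in E then p else 1)); last first.
  move=> e _; rewrite big_bool /F; case: (e \in E) => /=; lra.
rewrite -big_mkcond prod_const; congr (_ ^ _); exact: eq_card.
Qed.


Lemma epair_eq (e e' : epair n) (a b : 'I_n) :
  (val e == (a, b)) || (val e == (b, a)) ->
  (val e' == (a, b)) || (val e' == (b, a)) -> e = e'.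
Proof.
move=> he he'; apply: val_inj; move: (valP e) (valP e') he he'.
case: (val e) => x y; case: (val e') => x' y' /= h h'.
by case/orP => /eqP [e1 e2]; case/orP => /eqP [e3 e4]; subst => //; lia.
Qed.

Lemma ordSS l (i : 'I_l) : (3 <= l)%N -> ordS (ordS i) <> i.
Proof.
move=> l3 e; have h1 := ordS_val i; have h2 := ordS_val (ordS i).
rewrite e in h2; have := ltn_ord i; move: h1 h2.
case: eqP => ?; case: eqP => ? h1 h2; lia.
Qed.

Lemma pow_decr (a b : nat) : (a <= b)%N -> p ^ b <= p ^ a.
Proof.
move=> ab; rewrite -(subnK ab) pow_add.
have : p ^ (b - a) <= 1.
  elim: (b - a)%N => /= [|k IH]; first lra.
  have := pow_le p k p0; nra.
have := pow_le p a p0; nra.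
Qed.

Lemma prob_cyc l (f : {ffun 'I_l -> 'I_n}) : (3 <= l)%N -> injective f ->
  prob p (fun G => cyc G f) <= p ^ l.
Proof.
move=> l3 finj.
pose mt (i : 'I_l) (e : epair n) :=
  (val e == (f i, f (ordS i))) || (val e == (f (ordS i), f i)).
pose E := [set e | [exists i, mt i e]].
case: (classic (exists G0, cyc G0 f)) => [[G0 c0]|nc]; last first.
  rewrite probE big_pred0; first by apply: pow_le.
  by move=> G; apply/pboolP => h; apply: nc; exists G.
have hE : forall G, cyc G f -> E \subset G.
  move=> G c; apply/subsetP => e; rewrite inE => /existsP [i mi].
  have /existsP [e' /andP [e'G m']] := c i.
  by rewrite (epair_eq mi m').
apply: Rle_trans (prob_mono (B := fun G => E \subset G) hE) _.
rewrite prob_sub; apply: pow_decr.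
have l0 : (0 < l)%N by lia.
have /existsP [e0 _] := c0 (Ordinal l0).
pose g i := odflt e0 [pick e | mt i e].
have gm : forall i, mt i (g i).
  move=> i; have /existsP [e' /andP [_ m']] := c0 i.
  rewrite /g; case: pickP => [e //|/(_ e') h]; by rewrite /mt m' in h.
have ginj : injective g.
  move=> i j e; have := gm i; have := gm j; rewrite e.
  set x := g j; rewrite /mt => hj hi.
  case/orP: hi => /eqP hi; case/orP: hj => /eqP hj; rewrite hi in hj; case: hj.
  - by move=> /finj.
  - move=> /finj e1 /finj e2; exfalso; apply: (@ordSS l i l3); by rewrite e2 -e1.
  - move=> /finj e1 /finj e2; exfalso; apply: (@ordSS l i l3); by rewrite e1 -e2.
  - by move=> _ /finj.
have -> : l = #|g @: [set: 'I_l]| by rewrite card_imset // cardsT card_ord.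
apply: subset_leq_card; apply/subsetP => e /imsetP [i _ ->].
by rewrite inE; apply/existsP; exists i; apply: gm.
Qed.


Lemma event_cyc k conn G : event 2 k conn G ->
  exists l : 'I_n.+1, (3 <= l)%N /\
    exists f : {ffun 'I_l -> 'I_n}, injectiveb f /\ cyc G f.
Proof.
move=> [W [_ [_ [[_ nc] _]]]].
have nc2 := nc 2%N (erefl true).
case: (core_or_col G (leqnn #|W|)) => [//|[S cS]].
have [l [/andP [l3 ln] [f [fi fc]]]] := core_cycle cS.
exists (Ordinal (ln : (l < n.+1)%N)); split => //.
by exists f; split => //; apply/injectiveP.
Qed.

End Prob.

Lemma sum_pred_le (I : finType) (P : pred I) (F : I -> R) :
  (forall i, 0 <= F i) -> \big[Rplus/R0]_(i | P i) F i <= \big[Rplus/R0]_i F i.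
Proof.
move=> h; rewrite [X in _ <= X](bigID P) /=; apply: le_addr.
exact: sum_ge0.
Qed.

Lemma geo c m : 0 <= c ->
  \big[Rplus/R0]_(l < m) (c * (/2) ^ l) + 2 * c * (/2) ^ m <= 2 * c.
Proof.
move=> c0; elim: m => [|m IH]; first by rewrite big_ord0 /=; lra.
rewrite big_ord_recr /=.
have := pow_le (/2) m ltac:(lra).
move: IH; set S := \big[Rplus/R0]_(i < m) _; set q := (/2) ^ m; nra.
Qed.

Lemma xpow x l : 0 <= x <= /2 -> (1 <= l)%N -> x ^ l <= 2 * x * (/2) ^ l.
Proof.
move=> hx; elim: l => [//|l IH] _ /=.
case: l IH => [|l] IH /=; first lra.
have := IH isT; have := pow_le x l.+1 ltac:(lra); simpl; nra.
Qed.

Lemma INR_expn a b : INR (a ^ b) = INR a ^ b.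
Proof. by elim: b => //= b IH; rewrite expnS -multE mult_INR IH. Qed.

Lemma event_bound n p k conn : 0 <= p -> p <= 1 -> INR n * p <= /8 ->
  @prob n p (event 2 k conn) <= /2.
Proof.
move=> p0 p1 hx.
have x0 : 0 <= INR n * p by have := pos_INR n; nra.
apply: Rle_trans (prob_mono p0 p1 (@event_cyc n k conn)) _.
apply: Rle_trans (prob_union p0 p1 (fun l : 'I_n.+1 => (3 <= l)%N)
  (fun l G => exists f : {ffun 'I_l -> 'I_n}, injectiveb f /\ cyc G f)) _.
apply: Rle_trans (@sum_le _ _ _ (fun l : 'I_n.+1 => 2 * (INR n * p) * (/2) ^ l) _) _.
  move=> l l3.
  apply: Rle_trans (prob_union p0 p1 (fun f : {ffun 'I_l -> 'I_n} => injectiveb f)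
    (fun f G => cyc G f)) _.
  apply: Rle_trans (@sum_le _ _ _ (fun _ => p ^ l) _) _.
    by move=> f /injectiveP fi; apply: prob_cyc.
  rewrite sum_const.
  apply: Rle_trans (_ : INR (n ^ l) * p ^ l <= _).
    apply: Rmult_le_compat_r; first exact: pow_le.
    apply: le_INR; apply/leP.
    by apply: leq_trans (max_card _) _; rewrite card_ffun !card_ord.
  rewrite INR_expn -Rpow_mult_distr; apply: xpow; first lra.
  by apply: leq_trans l3.
apply: Rle_trans (sum_pred_le _ _) _.
  move=> l; have := pow_le (/2) l ltac:(lra); nra.
have := @geo (2 * (INR n * p)) n.+1 ltac:(lra); have := pow_le (/2) n.+1 ltac:(lra).
set S := \big[Rplus/R0]_(l < n.+1) _; nra.
Qed.

Close Scope R_scope.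

Theorem theorem13 (p : nat -> R)
  (hp : forall n : nat, Rle R0 (p n) /\ Rle (p n) R1)
  (ho : Un_cv (fun n : nat => Rmult (INR n) (p n)) R0) :
  exists N : nat, forall n : nat, N <= n ->
    is_u 2 n (p n) 0 /\ is_u' 2 n (p n) 0.
Proof.
Local Open Scope R_scope.
have [N hN] := ho (/8) ltac:(lra).
exists N => n /leP nN.
have := hN n nN; rewrite /R_dist Rminus_0_r => /Rabs_def2 [h1 _].
have [p0 p1] := hp n.
have b : forall k conn, ~ (@prob n (p n) (event 2 k conn) > / INR 2).
  move=> k conn; have := event_bound k conn p0 p1 (Rlt_le _ _ h1).
  rewrite /=; lra.
by split; left; split => // k _; apply: b.
Qed.
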